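(* For all integers $1\le t\le n$, the $t$-out-of-$n$ function $f_{t,n}:\{0,1\}^n\to\{0,1\}$, defined by $f_{t,n}(x)=1$ if $\sum_{i=1}^n x_i\ge t$ and $f_{t,n}(x)=0$ otherwise, has a quadratization using $\lceil n/2\rceil$ auxiliary variables.
   Context: A quadratization of $f:\{0,1\}^n\to\mathbb{R}$ using $m$ auxiliary variables is a polynomial $g(x,y)$ of degree at most $2$ in $x_1,\ldots,x_n,y_1,\ldots,y_m$ such that $f(x)=\min\{g(x,y):y\in\{0,1\}^m\}$ for all $x\in\{0,1\}^n$. *)

(* Defs.v *)
From Stdlib Require Import Reals Lra Lia Arith.
Open Scope R_scope.

Definition b2R (b : bool) : R := if b then 1 else 0.

Fixpoint rsum (N : nat) (f : nat -> R) : R :=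
  match N with
  | O => 0
  | S k => rsum k f + f k
  end.

Record quadpoly := QuadPoly {
  qc : R;
  qlin : nat -> R;
  qquad : nat -> nat -> R }.

Definition qeval (p : quadpoly) (N : nat) (z : nat -> R) : R :=
  qc p + rsum N (fun i => qlin p i * z i)
       + rsum N (fun i => rsum N (fun j => qquad p i j * z i * z j)).

(* Variables (x_1..x_n, y_1..y_m) are indexed 0..n-1 and n..n+m-1. *)
Definition joinvars (n : nat) (x y : nat -> bool) (i : nat) : R :=
  if Nat.ltb i n then b2R (x i) else b2R (y (i - n)%nat).

Definition geval (p : quadpoly) (n m : nat) (x y : nat -> bool) : R :=
  qeval p (n + m) (joinvars n x y).

(* f : {0,1}^n -> R (points of {0,1}^n are x : nat -> bool, using x 0..x (n-1)).
   g is a quadratization of f with m auxiliary variables iff for every x,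
   f x = min_{y in {0,1}^m} g(x,y), i.e. f x is a lower bound attained by some y. *)
Definition is_quadratization (n m : nat) (f : (nat -> bool) -> R) (p : quadpoly) : Prop :=
  forall x : nat -> bool,
    (forall y : nat -> bool, f x <= geval p n m x y) /\
    (exists y : nat -> bool, geval p n m x y = f x).

Definition has_quadratization (n m : nat) (f : (nat -> bool) -> R) : Prop :=
  exists p : quadpoly, is_quadratization n m f p.

Fixpoint count_ones (n : nat) (x : nat -> bool) : nat :=
  match n with
  | O => O
  | S k => (count_ones k x + (if x k then 1 else 0))%nat
  end.

Definition t_out_of_n (t n : nat) (x : nat -> bool) : R :=
  if Nat.leb t (count_ones n x) then 1 else 0.

(* Main.v *)
Require Import Defs.
From Stdlib Require Import Reals Arith.
From Stdlib Require Import Lra Lia.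
Open Scope R_scope.

Lemma div2_facts a : a = (2 * (a/2) + a mod 2)%nat /\ (a mod 2 < 2)%nat.
Proof. split. apply Nat.div_mod_eq. apply Nat.mod_upper_bound; lia. Qed.

Lemma rsum_ext N f g : (forall i, (i < N)%nat -> f i = g i) -> rsum N f = rsum N g.
Proof. induction N; intros H; simpl; auto. rewrite IHN by (intros; apply H; lia). rewrite H by lia. auto. Qed.

Lemma rsum_plus N f g : rsum N (fun i => f i + g i) = rsum N f + rsum N g.
Proof. induction N; simpl; [ring|rewrite IHN; ring]. Qed.

Lemma rsum_mult N c f : rsum N (fun i => c * f i) = c * rsum N f.
Proof. induction N; simpl; [ring|rewrite IHN; ring]. Qed.

Lemma rsum_zero N : rsum N (fun _ => 0) = 0.
Proof. induction N; simpl; [ring|rewrite IHN; ring]. Qed.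

Lemma rsum_split n m f : rsum (n + m) f = rsum n f + rsum m (fun j => f (n + j)%nat).
Proof. induction m; simpl. rewrite Nat.add_0_r; ring. rewrite Nat.add_succ_r. simpl. rewrite IHm. ring. Qed.

Definition Fz (N:nat) (u z : nat -> R) := rsum N (fun i => u i * z i).
Definition Dz N (q: nat->nat->R) z := rsum N (fun i => rsum N (fun j => q i j * z i * z j)).
Definition qprod (c:R) (u v: nat->R) := fun i j : nat => c * u i * v j.
Definition qplus (q1 q2 : nat -> nat -> R) := fun i j : nat => q1 i j + q2 i j.
Definition lplus (u v : nat -> R) := fun i : nat => u i + v i.
Definition lscal c (u : nat -> R) := fun i : nat => c * u i.

Lemma D_plus N q1 q2 z : Dz N (qplus q1 q2) z = Dz N q1 z + Dz N q2 z.
Proof. unfold Dz. rewrite <- rsum_plus. apply rsum_ext; intros. rewrite <- rsum_plus.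
apply rsum_ext; intros. unfold qplus; ring. Qed.

Lemma D_prod N c u v z : Dz N (qprod c u v) z = c * Fz N u z * Fz N v z.
Proof. unfold Dz. transitivity (rsum N (fun i => (c * Fz N v z) * (u i * z i))).
- apply rsum_ext; intros. unfold Fz.
  transitivity (rsum N (fun j => (c * u i * z i) * (v j * z j))).
  apply rsum_ext; intros; unfold qprod; ring. rewrite rsum_mult; ring.
- rewrite rsum_mult. unfold Fz. ring. Qed.

Lemma F_plus N u v z : Fz N (lplus u v) z = Fz N u z + Fz N v z.
Proof. unfold Fz. rewrite <- rsum_plus. apply rsum_ext; intros; unfold lplus; ring. Qed.

Lemma F_scal N c u z : Fz N (lscal c u) z = c * Fz N u z.
Proof. unfold Fz. rewrite <- rsum_mult. apply rsum_ext; intros; unfold lscal; ring. Qed.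

Lemma count_rsum n x : rsum n (fun i => b2R (x i)) = INR (count_ones n x).
Proof. induction n; simpl; auto. rewrite IHn, plus_INR. destruct (x n); simpl; ring. Qed.

Lemma count_le n x : (count_ones n x <= n)%nat.
Proof. induction n; simpl; auto. destruct (x n); lia. Qed.

Definition ix (n : nat) : nat -> R := fun i => if Nat.ltb i n then 1 else 0.
Definition lift (n : nat) (a : nat -> R) : nat -> R :=
  fun i => if Nat.ltb i n then 0 else a (i - n)%nat.

Lemma F_ix n m x y : Fz (n + m) (ix n) (joinvars n x y) = INR (count_ones n x).
Proof. unfold Fz. rewrite rsum_split. rewrite <- count_rsum.
rewrite (rsum_ext m _ (fun _ => 0)). rewrite rsum_zero.
rewrite Rplus_0_r. apply rsum_ext; intros. unfold ix, joinvars.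
replace (Nat.ltb i n) with true by (symmetry; apply Nat.ltb_lt; auto). ring.
intros. unfold ix. replace (Nat.ltb (n+i) n) with false by (symmetry; apply Nat.ltb_ge; lia). ring. Qed.

Lemma F_lift n m a x y : Fz (n + m) (lift n a) (joinvars n x y) = rsum m (fun j => a j * b2R (y j)).
Proof. unfold Fz. rewrite rsum_split.
rewrite (rsum_ext n _ (fun _ => 0)). rewrite rsum_zero. rewrite Rplus_0_l.
apply rsum_ext; intros. unfold lift, joinvars.
replace (Nat.ltb (n+i) n) with false by (symmetry; apply Nat.ltb_ge; lia).
replace (n + i - n)%nat with i by lia. auto.
intros. unfold lift. replace (Nat.ltb i n) with true by (symmetry; apply Nat.ltb_lt; auto). ring. Qed.

Lemma rsum01 m f : (forall j, f j = 0 \/ f j = 1) -> exists c, rsum m f = INR c.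
Proof. intros H. induction m. exists O; auto. destruct IHm as [c Hc]. simpl. rewrite Hc.
destruct (H m) as [E|E]; rewrite E. exists c; ring. exists (S c). rewrite S_INR; ring. Qed.

Lemma rsum_lt m s : rsum m (fun j => if Nat.ltb j s then 1 else 0) = INR (Nat.min s m).
Proof. induction m; simpl. rewrite Nat.min_0_r; auto. rewrite IHm.
destruct (Nat.ltb_spec m s).
- replace (Nat.min s m) with m by lia. replace (Nat.min s (S m)) with (S m) by lia. rewrite S_INR; ring.
- replace (Nat.min s m) with s by lia. replace (Nat.min s (S m)) with s by lia. ring. Qed.

Lemma rsum_eq m p c : (p < m)%nat -> rsum m (fun j => if Nat.eqb j p then c else 0) = c.
Proof. induction m; intros H. lia. simpl. destruct (Nat.eqb_spec m p).
- subst. rewrite (rsum_ext p _ (fun _ => 0)). rewrite rsum_zero; ring.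
  intros. replace (Nat.eqb i p) with false by (symmetry; apply Nat.eqb_neq; lia). auto.
- rewrite IHm by lia. ring. Qed.

Lemma int_case (a b : nat) : INR a - INR b >= 0 \/ INR a - INR b <= -1.
Proof. destruct (le_lt_dec b a) as [H|H].
- left. apply le_INR in H. lra.
- right. assert (H' : (S a <= b)%nat) by lia. apply le_INR in H'. rewrite S_INR in H'. lra. Qed.

Definition al (L : nat) : nat -> R := fun j => if Nat.ltb j L then 1 else 0.
Definition ar (L Rr : nat) : nat -> R := fun j => if andb (Nat.leb L j) (Nat.ltb j (L + Rr)) then 1 else 0.
Definition az (L Rr : nat) : nat -> R := fun j => if Nat.eqb j (L + Rr) then 1 else 0.

Definition thepoly (n t : nat) : quadpoly :=
  let L := ((t - 1) / 2)%nat in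
  let Rr := ((n - t) / 2)%nat in
  let T := INR t in
  let a := 1 - T in
  QuadPoly (a * (a + 1) / 2)
    (lplus (lscal ((2 * a + 1) / 2) (ix n))
      (lplus (lscal (3 - 2 * T) (lift n (al L)))
       (lplus (lscal (2 * T + 1) (lift n (ar L Rr))) (lscal (2 * T) (lift n (az L Rr))))))
    (qplus (qprod (1/2) (ix n) (ix n))
    (qplus (qprod 2 (lift n (al L)) (lift n (al L)))
    (qplus (qprod 2 (ix n) (lift n (al L)))
    (qplus (qprod 2 (lift n (ar L Rr)) (lift n (ar L Rr)))
    (qplus (qprod (-2) (ix n) (lift n (ar L Rr)))
           (qprod (-2) (ix n) (lift n (az L Rr)))))))).

Lemma geval_eq n t m x y :
  let L := ((t - 1) / 2)%nat in
  let Rr := ((n - t) / 2)%nat in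
  let T := INR t in
  let K := INR (count_ones n x) in
  let SL := rsum m (fun j => al L j * b2R (y j)) in
  let SR := rsum m (fun j => ar L Rr j * b2R (y j)) in
  let Z := rsum m (fun j => az L Rr j * b2R (y j)) in
  geval (thepoly n t) n m x y =
   (K - T + 1) * (K - T + 2) / 2 + 2 * SL * SL + (2 * K - 2 * T + 3) * SL
   + 2 * SR * SR + (2 * T + 1 - 2 * K) * SR + Z * (2 * T - 2 * K).
Proof. intros. unfold geval, qeval.
change (rsum (n+m) (fun i => qlin (thepoly n t) i * joinvars n x y i)) with (Fz (n+m) (qlin (thepoly n t)) (joinvars n x y)).
change (rsum (n+m) (fun i => rsum (n+m) (fun j => qquad (thepoly n t) i j * joinvars n x y i * joinvars n x y j))) with (Dz (n+m) (qquad (thepoly n t)) (joinvars n x y)).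
cbn [qc qlin qquad thepoly].
rewrite !D_plus, !D_prod, !F_plus, !F_scal, !F_ix, !F_lift.
unfold SL, SR, Z, K, T, L, Rr. field. Qed.

Ltac cmp_cases := repeat match goal with
  | |- context [Nat.ltb ?a ?b] => destruct (Nat.ltb_spec a b)
  | |- context [Nat.leb ?a ?b] => destruct (Nat.leb_spec a b)
  | |- context [Nat.eqb ?a ?b] => destruct (Nat.eqb_spec a b)
  end; simpl; try lia; try ring.

Definition ychoice (L Rr sL sR : nat) (zb : bool) : nat -> bool :=
  fun j => if Nat.ltb j L then Nat.ltb j sL else if Nat.ltb j (L + Rr) then Nat.ltb (j - L) sR else zb.

Lemma SL_val m L Rr sL sR zb : (sL <= L)%nat -> (L < m)%nat \/ (L <= m)%nat ->
  rsum m (fun j => al L j * b2R (ychoice L Rr sL sR zb j)) = INR (Nat.min sL m).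
Proof. intros. rewrite <- rsum_lt. apply rsum_ext; intros. unfold al, ychoice. cmp_cases. Qed.

Lemma SR_val m L Rr sL sR zb : (sR <= Rr)%nat -> (L + Rr <= m)%nat ->
  rsum m (fun j => ar L Rr j * b2R (ychoice L Rr sL sR zb j)) = INR sR.
Proof. intros.
transitivity (rsum m (fun j => (if Nat.ltb j (L + sR) then 1 else 0) + (-1) * (if Nat.ltb j L then 1 else 0))).
apply rsum_ext; intros. unfold ar, ychoice. cmp_cases.
rewrite rsum_plus, rsum_mult, !rsum_lt.
replace (Nat.min (L + sR) m) with (L + sR)%nat by lia.
replace (Nat.min L m) with L by lia. rewrite plus_INR; ring. Qed.

Lemma Z_val m L Rr sL sR zb : (L + Rr < m)%nat ->
  rsum m (fun j => az L Rr j * b2R (ychoice L Rr sL sR zb j)) = b2R zb.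
Proof. intros. rewrite <- (rsum_eq m (L + Rr) (b2R zb)) by auto.
apply rsum_ext; intros. unfold az, ychoice. destruct (Nat.eqb_spec i (L + Rr)).
subst. cmp_cases. ring. Qed.

Lemma b01 b : b2R b = 0 \/ b2R b = 1.
Proof. destruct b; simpl; auto. Qed.

Theorem corollary3 (t n : nat) (Ht : (1 <= t)%nat) (Htn : (t <= n)%nat) :
  has_quadratization n ((n + 1) / 2)%nat (t_out_of_n t n).
Proof.
  exists (thepoly n t). intros x.
  set (m := ((n + 1) / 2)%nat).
  set (L := ((t - 1) / 2)%nat). set (Rr := ((n - t) / 2)%nat).
  assert (HLR : (L + Rr < m)%nat).
  { unfold L, Rr, m. destruct (div2_facts (t-1)), (div2_facts (n-t)), (div2_facts (n+1)). lia. }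
  set (k := count_ones n x).
  assert (Hkn : (k <= n)%nat) by apply count_le.
  unfold t_out_of_n. fold k.
  split.
  - intros y. rewrite geval_eq. cbv zeta. fold L Rr k.
    destruct (rsum01 m (fun j => al L j * b2R (y j))) as [cL HcL].
    { intros j. unfold al. destruct (Nat.ltb j L); destruct (b01 (y j)) as [E|E]; rewrite E; lra. }
    destruct (rsum01 m (fun j => ar L Rr j * b2R (y j))) as [cR HcR].
    { intros j. unfold ar. destruct (andb _ _); destruct (b01 (y j)) as [E|E]; rewrite E; lra. }
    assert (HZ : rsum m (fun j => az L Rr j * b2R (y j)) = b2R (y (L + Rr)%nat)).
    { rewrite <- (rsum_eq m (L + Rr) (b2R (y (L + Rr)%nat))) by auto.
      apply rsum_ext; intros. unfold az. destruct (Nat.eqb_spec i (L + Rr)). subst; ring. ring. }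
    rewrite HcL, HcR, HZ.
    assert (HZ01 := b01 (y (L + Rr)%nat)).
    assert (HcL0 := pos_INR cL). assert (HcR0 := pos_INR cR).
    destruct (Nat.leb_spec t k) as [Htk|Htk].
    + apply le_INR in Htk.
      destruct (int_case (2 * cR + t) k) as [Hv|Hv]; rewrite plus_INR, mult_INR in Hv; simpl in Hv.
      * nra.
      * nra.
    + assert (Htk' : (S k <= t)%nat) by lia. apply le_INR in Htk'. rewrite S_INR in Htk'.
      destruct (int_case (2 * cL + k + 1) t) as [Hv|Hv]; rewrite !plus_INR, mult_INR in Hv; simpl in Hv.
      * nra.
      * nra.
  - destruct (Nat.leb_spec t k) as [Htk|Htk].
    + exists (ychoice L Rr 0 ((k - t) / 2) true).
      rewrite geval_eq. cbv zeta. fold L Rr k.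
      rewrite (SL_val m L Rr 0 ((k-t)/2) true) by lia.
      assert (HsR : ((k - t) / 2 <= Rr)%nat) by (apply Nat.div_le_mono; lia).
      rewrite (SR_val m L Rr 0 ((k-t)/2) true) by lia.
      rewrite Z_val by lia.
      destruct (div2_facts (k - t)) as [E1 E2].
      assert (H2 : (2 * ((k - t) / 2) + t = k)%nat \/ (2 * ((k - t) / 2) + t + 1 = k)%nat) by lia.
      replace (Nat.min 0 m) with 0%nat by lia.
      destruct H2 as [H2|H2]; apply (f_equal INR) in H2; rewrite ?plus_INR, ?mult_INR in H2; simpl in *; nra.
    + exists (ychoice L Rr ((t - 1 - k) / 2) 0 false).
      rewrite geval_eq. cbv zeta. fold L Rr k.
      assert (HsL : ((t - 1 - k) / 2 <= L)%nat) by (apply Nat.div_le_mono; lia).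
      rewrite (SL_val m L Rr ((t - 1 - k) / 2) 0 false) by lia.
      rewrite (SR_val m L Rr ((t - 1 - k) / 2) 0 false) by lia.
      rewrite Z_val by lia.
      replace (Nat.min ((t - 1 - k) / 2) m) with ((t - 1 - k) / 2)%nat by lia.
      destruct (div2_facts (t - 1 - k)) as [E1 E2].
      assert (H2 : (2 * ((t - 1 - k) / 2) + k + 1 = t)%nat \/ (2 * ((t - 1 - k) / 2) + k + 2 = t)%nat) by lia.
      destruct H2 as [H2|H2]; apply (f_equal INR) in H2; rewrite ?plus_INR, ?mult_INR in H2; simpl in *; nra.
Qed.
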